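(* Let $0<c_1,c_2<1$ and $0<\eta\le 1$ be constants and let $m$ be a sufficiently large integer. Let $H(X,Y,Z)$ be a $3$-partite $3$-uniform hypergraph with $|X|=|Y|=c_1 m$ and $|Z|\geq c_2 2^{m^2}$. If $d_3(Z,(X\times Y))\geq\eta$, then there exists a complete $3$-partite $3$-uniform hypergraph $H'(X',Y',Z')$ that is a subhypergraph of $H$, with $X'\subseteq X$, $Y'\subseteq Y$, $Z'\subseteq Z$ and $|X'|=|Y'|=|Z'|\geq \frac{\eta}{4}\log|X|$.
   Context: A $3$-partite $3$-uniform hypergraph $H(X,Y,Z)$ has vertex set partitioned into $X,Y,Z$ and every edge contains exactly one vertex from each part. $d_3(Z,(X\times Y))$ is the number of edges of $H$ divided by $|X||Y||Z|$. A complete $3$-partite $3$-graph $H'(X',Y',Z')$ contains all triples with one vertex in each of $X',Y',Z'$. $\log$ is base $2$. *)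

(* Defs.v *)
From Stdlib Require Export Reals.
From mathcomp Require Export all_boot.
Set Implicit Arguments.
Local Open Scope R_scope. Unset Strict Implicit. Unset Printing Implicit Defensive.

Definition log2 (x : R) : R := ln x / ln 2.

(* A 3-partite 3-uniform hypergraph H(X,Y,Z): parts X, Y, Z live in
   (disjoint) finite types TX, TY, TZ; the edge set E is a set of triples
   (x,y,z) with x in X, y in Y, z in Z. *)
Definition partite3 (TX TY TZ : finType) (X : {set TX}) (Y : {set TY})
  (Z : {set TZ}) (E : {set TX * TY * TZ}) : Prop :=
  forall t, t \in E -> [/\ t.1.1 \in X, t.1.2 \in Y & t.2 \in Z].

Definition d3 (TX TY TZ : finType) (X : {set TX}) (Y : {set TY})
  (Z : {set TZ}) (E : {set TX * TY * TZ}) : R :=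
  (INR #|E| / (INR #|X| * INR #|Y| * INR #|Z|)).

Definition complete_sub (TX TY TZ : finType) (X' : {set TX}) (Y' : {set TY})
  (Z' : {set TZ}) (E : {set TX * TY * TZ}) : Prop :=
  forall x y z, x \in X' -> y \in Y' -> z \in Z' -> (x, y, z) \in E.

(* Main.v *)
From Stdlib Require Import Lra Lia Psatz ZArith.
Require Import Defs.
Set Implicit Arguments. Unset Strict Implicit.
Open Scope R_scope.

Lemma INR_addn (a b : nat) : INR (a + b)%N = INR a + INR b.
Proof. exact: plus_INR. Qed.
Lemma INR_muln (a b : nat) : INR (a * b)%N = INR a * INR b.
Proof. exact: mult_INR. Qed.
Lemma INR_len (a b : nat) : (a <= b)%N -> INR a <= INR b.
Proof. move=> h; apply: le_INR; apply/leP. exact h. Qed.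
Lemma INR_len_inv (a b : nat) : (INR a <= INR b) -> (a <= b)%N.
Proof. move=> h; apply/leP; exact: INR_le. Qed.

Definition Rleb (x y : R) : bool := if Rle_dec x y then true else false.
Lemma RlebP x y : Rleb x y = true <-> (x <= y).
Proof. rewrite /Rleb; case: Rle_dec => //. Qed.

Lemma card_sum (T : finType) (A : {set T}) (P : pred T) :
  #|[set x in A | P x]| = \sum_(x in A) (P x : nat).
Proof.
rewrite -sum1_card big_mkcond [RHS]big_mkcond /=.
apply: eq_bigr => i _; rewrite inE; by case: (i \in A); case: (P i).
Qed.

Definition deg (TR TC : finType) (R : {set TR}) (G : TR -> TC -> bool) (c : TC) :=
  #|[set r in R | G r c]|.

Lemma double_count (TR TC : finType) (R : {set TR}) (C : {set TC}) (G : TR -> TC -> bool) :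
  \sum_(r in R) #|[set c in C | G r c]| = \sum_(c in C) deg R G c.
Proof.
rewrite /deg.
under eq_bigr => r _ do rewrite card_sum.
under [RHS]eq_bigr => c _ do rewrite card_sum.
exact: exchange_big.
Qed.

Lemma pair_count (TR TC : finType) (R : {set TR}) (C : {set TC}) (G : TR -> TC -> bool) :
  #|[set p | (p.1 \in R) && (p.2 \in C) && G p.1 p.2]| = \sum_(c in C) deg R G c.
Proof.
rewrite -double_count -sum1_card big_mkcond /=.
transitivity (\sum_(p : TR * TC) (fun r c => if (r \in R) && (c \in C) && G r c then 1 else 0)%N p.1 p.2).
  by apply: eq_bigr => -[r c] _; rewrite inE.
rewrite -(pair_bigA _ (fun r c => if (r \in R) && (c \in C) && G r c then 1 else 0)%N) /=.
rewrite [RHS]big_mkcond /=; apply: eq_bigr => r _.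
rewrite card_sum.
case rR: (r \in R).
  rewrite [RHS]big_mkcond /=; apply: eq_bigr => c _ /=; by case: (c \in C); case: (G r c).
by rewrite big1.
Qed.

Lemma sum_lo (I : finType) (A : pred I) (F : I -> nat) (r : R) :
  (forall i, i \in A -> r <= INR (F i)) -> INR #|A| * r <= INR (\sum_(i in A) F i).
Proof.
move=> h; rewrite -sum1_card.
apply: (big_ind2 (fun a b => INR a * r <= INR b)).
- rewrite /=; lra.
- move=> x1 x2 y1 y2 h1 h2; rewrite !INR_addn; lra.
- move=> i Ai; rewrite /= Rmult_1_l; exact: h.
Qed.

Lemma sum_hi (I : finType) (A : pred I) (F : I -> nat) (r : R) :
  (forall i, i \in A -> INR (F i) <= r) -> INR (\sum_(i in A) F i) <= INR #|A| * r.
Proof.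
move=> h; rewrite -sum1_card.
apply: (big_ind2 (fun b a => INR a <= INR b * r)).
- rewrite /=; lra.
- move=> x1 x2 y1 y2 h1 h2; rewrite !INR_addn; lra.
- move=> i Ai; rewrite /= Rmult_1_l; exact: h.
Qed.

Lemma deg_le (TR TC : finType) (R0 : {set TR}) (G : TR -> TC -> bool) c :
  (deg R0 G c <= #|R0|)%N.
Proof.
apply: subset_leq_card; apply/subsetP => r; rewrite inE => /andP[] //.
Qed.

Lemma high (TR TC : finType) (R0 : {set TR}) (C : {set TC}) (G : TR -> TC -> bool) (D : R) :
  0 <= D ->
  INR (\sum_(c in C) deg R0 G c) <=
  INR #|C :&: [set c | Rleb D (INR (deg R0 G c))]| * INR #|R0| + INR #|C| * D.
Proof.
move=> D0.
rewrite (big_setID [set c | Rleb D (INR (deg R0 G c))]) /= INR_addn.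
apply: Rplus_le_compat.
  apply: sum_hi => c _; apply: INR_len; exact: deg_le.
apply: Rle_trans (_ : INR #|C :\: [set c | Rleb D (INR (deg R0 G c))]| * D <= _).
  apply: sum_hi => c; rewrite !inE => /andP[h _].
  case E: (Rleb D (INR (deg R0 G c))) h => // _.
  have : ~ (D <= INR (deg R0 G c)) by move=> /RlebP; rewrite E.
  lra.
apply: Rmult_le_compat_r => //; apply: INR_len; apply: subset_leq_card; exact: subsetDl.
Qed.

Lemma greedy (TR TC : finType) (R0 : {set TR}) (W : {set TC}) (G : TR -> TC -> bool)
  (D : R) (t : nat) :
  (forall c, c \in W -> D <= INR (deg R0 G c)) -> 2 * INR t <= D -> (t <= #|R0|)%N ->
  forall k, (k <= t)%N -> exists S : {set TR},
    [/\ S \subset R0, #|S| = k &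
        (D / (2 * INR #|R0|)) ^ k * INR #|W| <=
        INR #|[set c in W | [forall r in S, G r c]]| ].
Proof.
move=> hW hD ht; elim=> [|k IH] hk.
  exists set0; split => //; first exact: sub0set; first by rewrite cards0.
  rewrite /= Rmult_1_l; apply: INR_len; apply: subset_leq_card.
  apply/subsetP => c cW; rewrite inE cW /=; apply/forallP => r; rewrite inE //.
have hk' : (k <= t)%N by apply: leq_trans hk; exact: leqnSn.
have [S [SR cS bS]] := IH hk'.
set CN := [set c in W | [forall r in S, G r c]] in bS.
set A := R0 :\: S.
have cA : (0 < #|A|)%N.
  rewrite /A cardsD (setIidPr SR) cS.
  have : (k < #|R0|)%N by apply: leq_trans ht.
  move=> h; rewrite subn_gt0 //.
have [r1 r1A] : exists r1, r1 \in A.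
  by move: cA; rewrite card_gt0 => /set0Pn.
set a := fun r => #|[set c in CN | G r c]|.
case: (@arg_maxnP _ r1 (mem A) a r1A) => r0 r0A r0max.
have Rpos : (0 < #|R0|)%N := leq_trans (ltn0Sn k) (leq_trans hk ht).
have hsum : (\sum_(r in A) a r <= #|A| * a r0)%N.
  rewrite -sum_nat_const; apply: leq_sum => r rA; exact: r0max.
have hdc := double_count A CN G.
have hlo : INR #|CN| * (D - INR k) <= INR (\sum_(c in CN) deg A G c).
  apply: sum_lo => c cCN.
  have cW : c \in W by move: cCN; rewrite inE => /andP[].
  have h1 := hW c cW.
  have h2 : (deg R0 G c <= deg A G c + k)%N.
    rewrite /deg -cS.
    apply: leq_trans (_ : (#|[set r in A | G r c] :|: S| <= _)%N).
      apply: subset_leq_card; apply/subsetP => r; rewrite !inE => /andP[rR Gr].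
      by case rS: (r \in S); rewrite //= rR Gr.
    by rewrite cardsU leq_subr.
  have := INR_len h2; rewrite INR_addn; lra.
have hA : (#|A| <= #|R0|)%N by apply: subset_leq_card; exact: subsetDl.
have key : INR #|CN| * (D - INR k) <= INR #|R0| * INR (a r0).
  apply: Rle_trans hlo _; rewrite -hdc -INR_muln.
  apply: INR_len; apply: leq_trans hsum _; exact: leq_mul.
have r0R : r0 \in R0 by move: r0A; rewrite /= !inE => /andP[_ ->].
have r0S : r0 \notin S by move: r0A; rewrite /= !inE => /andP[-> _].
exists (r0 |: S); split.
- by rewrite subUset sub1set r0R SR.
- by rewrite cardsU1 r0S cS.
have hR : 0 < INR #|R0| by apply: lt_0_INR; apply/ltP.
have hkt : 2 * INR k.+1 <= D.
  apply: Rle_trans hD; have := INR_len hk; lra.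
have hkS : INR k.+1 = INR k + 1 by rewrite S_INR.
have hCN0 : 0 <= INR #|CN| by apply: pos_INR.
apply: Rle_trans (_ : INR (a r0) <= _).
  rewrite /= Rmult_assoc.
  apply: Rle_trans (_ : D / (2 * INR #|R0|) * INR #|CN| <= _).
    apply: Rmult_le_compat_l => //.
    apply: Rmult_le_pos; first by have := pos_INR k.+1; lra. apply: Rlt_le; apply: Rinv_0_lt_compat; lra.
  have e : D / (2 * INR #|R0|) * INR #|CN| = (D * INR #|CN|) / (2 * INR #|R0|) by field; lra.
  rewrite e; apply: (Rmult_le_reg_r (2 * INR #|R0|)); first lra.
  rewrite /Rdiv Rmult_assoc Rinv_l; last lra.
  nra.
apply: INR_len; apply: subset_leq_card; apply/subsetP => c.
rewrite !inE => /andP[/andP[cW /forallP hS] Gc].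
rewrite cW /=; apply/forallP => r; rewrite !inE; apply/implyP => /orP[/eqP -> // | rS].
by have := hS r; rewrite rS.
Qed.

Lemma sub_size (T : finType) (U : {set T}) (t : nat) :
  (t <= #|U|)%N -> exists V : {set T}, V \subset U /\ #|V| = t.
Proof.
elim: t => [|t IH] h.
  by exists set0; rewrite sub0set cards0.
have [V [VU cV]] := IH (leq_trans (leqnSn t) h).
have : (0 < #|U :\: V|)%N by rewrite cardsD (setIidPr VU) cV subn_gt0.
rewrite card_gt0 => /set0Pn [u]; rewrite inE => /andP[uV uU].
exists (u |: V); split; first by rewrite subUset sub1set uU VU.
by rewrite cardsU1 uV cV.
Qed.

Lemma cardE_pairs (TX TY TZ : finType) (X : {set TX}) (Y : {set TY}) (Z : {set TZ})
  (E : {set TX * TY * TZ}) : partite3 X Y Z E ->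
  #|[set p : TX * (TY * TZ) | (p.1 \in X) && (p.2 \in setX Y Z) &&
       ((p.1, p.2.1, p.2.2) \in E)]| = #|E|.
Proof.
move=> hP.
set f := fun p : TX * (TY * TZ) => (p.1, p.2.1, p.2.2).
have inj : injective f by move=> [x [y z]] [x' [y' z']] /= [-> -> ->].
set S := [set p : TX * (TY * TZ) | _].
suff eq : f @: S = E by rewrite -eq card_imset.
apply/setP => q.
apply/imsetP/idP.
  by case=> p; rewrite inE => /andP[/andP[_ _] h] ->.
move=> qE; exists (q.1.1, (q.1.2, q.2)); last by case: q qE => [[]].
have [h1 h2 h3] := hP q qE.
by rewrite inE /= h1 inE /= h2 h3 /=; case: q qE {h1 h2 h3} => [[]].
Qed.

Lemma comb (TX TY TZ : finType) (X : {set TX}) (Y : {set TY}) (Z : {set TZ})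
  (E : {set TX * TY * TZ}) (eta : R) (t : nat) :
  partite3 X Y Z E -> #|X| = #|Y| -> (0 < #|X|)%N -> 0 < eta ->
  eta * INR #|X| * INR #|X| * INR #|Z| <= INR #|E| ->
  2 * INR t <= eta * INR #|X| / 2 -> (t <= #|X|)%N ->
  let rho := eta / 2 * (eta / 4) ^ t in
  2 * INR t <= rho * INR #|X| / 2 ->
  INR t <= (rho / 4) ^ t * (rho / 2 * INR #|Z|) ->
  exists (X' : {set TX}) (Y' : {set TY}) (Z' : {set TZ}),
    [/\ X' \subset X, Y' \subset Y, Z' \subset Z, complete_sub X' Y' Z' E &
        [/\ #|X'| = t, #|Y'| = t & #|Z'| = t]].
Proof.
move=> hP hXY hX0 heta hE ht1 ht2 rho ht3 ht4.
set n := #|X| in hXY hX0 hE ht1 ht2 ht3.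
have hn : 0 < INR n by apply: lt_0_INR; apply/ltP.
have hK := pos_INR #|Z|.
set C := setX Y Z.
set G1 := fun (x : TX) (c : TY * TZ) => (x, c.1, c.2) \in E.
set D1 := eta * INR n / 2.
have hD1 : 0 <= D1 by rewrite /D1; have := Rmult_lt_0_compat _ _ heta hn; lra.
have hpc1 := pair_count X C G1.
rewrite cardE_pairs // in hpc1.
have hh1 := high X C G1 hD1.
rewrite -hpc1 cardsX -/n -hXY INR_muln in hh1.
set H1 := C :&: [set c | Rleb D1 (INR (deg X G1 c))] in hh1.
have hH1 : eta / 2 * INR n * INR #|Z| <= INR #|H1|.
  apply: (Rmult_le_reg_r (INR n)) => //.
  rewrite /D1 in hh1; nra.
have hdeg1 : forall c, c \in H1 -> D1 <= INR (deg X G1 c).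
  by move=> c; rewrite inE => /andP[_]; rewrite inE => /RlebP.
have [S [SX cS bS]] := greedy hdeg1 ht1 ht2 (leqnn t).
set W2 := [set c in H1 | [forall r in S, G1 r c]] in bS.
have ef1 : D1 / (2 * INR n) = eta / 4 by rewrite /D1; field; lra.
rewrite -/n ef1 in bS.
have hW2 : rho * INR n * INR #|Z| <= INR #|W2|.
  apply: Rle_trans bS; rewrite /rho.
  have := pow_le (eta / 4) t; have := Rmult_le_pos _ _ (Rlt_le _ _ hn) hK; nra.
set G2 := fun (y : TY) (z : TZ) => (y, z) \in W2.
set D2 := rho * INR n / 2.
have hrho : 0 < rho by rewrite /rho; apply: Rmult_lt_0_compat; [lra | apply: pow_lt; lra].
have hD2 : 0 <= D2 by rewrite /D2; have := Rmult_lt_0_compat _ _ hrho hn; lra.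
have hpc2 := pair_count Y Z G2.
have eW2 : [set p | (p.1 \in Y) && (p.2 \in Z) && G2 p.1 p.2] = W2.
  apply/setP => -[y z]; rewrite inE /G2 /=.
  case hw : ((y, z) \in W2); last by rewrite andbF.
  by move: hw; rewrite /W2 /H1 /C !inE /= => /andP[/andP[/andP[-> ->] _] _].
rewrite eW2 in hpc2.
have hh2 := high Y Z G2 hD2.
rewrite -hpc2 -hXY -/n in hh2.
set H2 := Z :&: [set c | Rleb D2 (INR (deg Y G2 c))] in hh2.
have hH2 : rho / 2 * INR #|Z| <= INR #|H2|.
  apply: (Rmult_le_reg_r (INR n)) => //.
  rewrite /D2 in hh2; nra.
have hdeg2 : forall c, c \in H2 -> D2 <= INR (deg Y G2 c).
  by move=> c; rewrite inE => /andP[_]; rewrite inE => /RlebP.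
have ht2' : (t <= #|Y|)%N by rewrite -hXY.
have ht3' : 2 * INR t <= D2 by [].
have [T [TsY cT bT]] := greedy hdeg2 ht3' ht2' (leqnn t).
set U := [set c in H2 | [forall r in T, G2 r c]] in bT.
have ef2 : D2 / (2 * INR #|Y|) = rho / 4 by rewrite /D2 -hXY -/n; field; lra.
rewrite ef2 in bT.
have hU : INR t <= INR #|U|.
  apply: Rle_trans ht4 _; apply: Rle_trans bT.
  apply: Rmult_le_compat_l => //; apply: pow_le; lra.
have [Z' [Z'U cZ']] := sub_size (INR_len_inv hU).
exists S, T, Z'; split => //.
- apply: subset_trans Z'U _; apply/subsetP => z; rewrite !inE => /andP[/andP[] //].
- move=> x y z xS yT zZ.
  have := subsetP Z'U z zZ; rewrite inE => /andP[_ /forallP /(_ y)].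
  rewrite yT /= /G2 inE => /andP[_ /forallP /(_ x)].
  by rewrite xS.
Qed.

Lemma ln_le_sub1 x : 0 < x -> ln x <= x - 1.
Proof.
move=> hx; case: (Req_dec (ln x) 0) => h.
  have : x = 1 by rewrite -(exp_ln x hx) h exp_0. lra.
have := exp_ineq1 _ h; rewrite exp_ln //; lra.
Qed.

Lemma exp_ge_lin x : 1 + x <= exp x.
Proof.
case: (Req_dec x 0) => h; first by rewrite h exp_0; lra.
have := exp_ineq1 _ h; lra.
Qed.

Lemma exp_ge_quad x : 0 <= x -> 1 + x + x * x / 4 <= exp x.
Proof.
move=> hx.
have e : exp x = exp (x/2) * exp (x/2) by rewrite -exp_plus; f_equal; lra.
have := exp_ge_lin (x/2); rewrite e; nra.
Qed.

Definition gg := / (exp 1 * ln 2).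

Lemma gg_bounds : 0 < gg < 1.
Proof.
have h1 : 2 < exp 1 by have := exp_ineq1 1 ltac:(lra); lra.
have h2 := ln_lt_2.
have h3 : 1 < exp 1 * ln 2 by nra.
rewrite /gg; split.
  apply: Rinv_0_lt_compat; lra.
have -> : (1 = / 1) by rewrite Rinv_1. apply: Rinv_lt_contravar; rewrite ?Rinv_1 ?Rmult_1_l; lra.
Qed.

Lemma ln2_pos : 0 < ln 2.
Proof. have := ln_lt_2; lra. Qed.

Lemma e_ln_e e : 0 < e -> - (e * ln e) <= / exp 1.
Proof.
move=> he.
have hE : 0 < exp 1 := exp_pos 1.
have hx : 0 < / (e * exp 1) by apply: Rinv_0_lt_compat; nra.
have := ln_le_sub1 hx.
rewrite ln_Rinv; last nra.
rewrite ln_mult // ln_exp.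
move=> h.
have : - ln e <= / (e * exp 1) by lra.
rewrite Rinv_mult.
move=> h2.
have := Rmult_le_compat_l e _ _ (Rlt_le _ _ he) h2.
have -> : e * (/ e * / exp 1) = / exp 1 by field; lra.
lra.
Qed.

Lemma pow_lower e u (t : nat) : 0 < e < 1 -> 0 <= u ->
  INR t <= e * u / ln 2 + 1 -> e * exp (- gg * u) <= e ^ t.
Proof.
move=> [he0 he1] hu ht.
rewrite -Rpower_pow // /Rpower.
have hle : ln e < 0 by rewrite -ln_1; apply: ln_increasing.
have hl2 := ln2_pos.
have h1 : (e * u / ln 2 + 1) * ln e <= INR t * ln e by nra.
have h2 := e_ln_e he0.
have h3 : ln e - gg * u <= (e * u / ln 2 + 1) * ln e.
  have -> : (e * u / ln 2 + 1) * ln e = ln e + u / ln 2 * (e * ln e) by field; lra.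
  have -> : gg * u = u / ln 2 * / exp 1 by rewrite /gg; field; split; [have := exp_pos 1; lra | lra].
  have : 0 <= u / ln 2 by apply: Rmult_le_pos => //; apply: Rlt_le; apply: Rinv_0_lt_compat.
  nra.
have -> : e * exp (- gg * u) = exp (ln e - gg * u).
  rewrite exp_plus exp_ln //; f_equal; f_equal; ring.
case: (Req_dec (ln e - gg * u) (INR t * ln e)) => [-> | hne]; first lra.
apply: Rlt_le; apply: exp_increasing; lra.
Qed.

Definition U0 e := 1 + 2 / (e * e) + 4 * (e / ln 2 + 2) / e
  + 8 * (e / ln 2 + 1) / (e * e * (1 - gg) * (1 - gg)).

Lemma div_ge (p q u : R) : 0 < q -> 0 <= p -> p / q <= u -> p <= q * u.
Proof.
move=> hq hp h.
have := Rmult_le_compat_l q _ _ (Rlt_le _ _ hq) h.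
have -> : q * (p / q) = p by field; lra. done.
Qed.

Lemma num_core e u (t : nat) : 0 < e <= 1/4 -> U0 e <= u -> INR t <= e * u / ln 2 + 1 ->
  INR t + 1 <= e * exp u /\ INR t <= 2 * e * e ^ t * exp u / 4 /\
  / (exp u * exp u) <= 2 * e * e ^ t / 4.
Proof.
move=> [he0 he1] hU ht.
have hl2 := ln2_pos.
have [hg0 hg1] := gg_bounds.
have hs : 0 < 1 - gg by lra.
have p1 : 0 <= e / ln 2 by apply: Rmult_le_pos; [lra | apply: Rlt_le; apply: Rinv_0_lt_compat; lra].
have q1 : 0 <= 2 / (e * e) by apply: Rmult_le_pos; [lra | apply: Rlt_le; apply: Rinv_0_lt_compat; nra].
have q2 : 0 <= 4 * (e / ln 2 + 2) / e.
  apply: Rmult_le_pos; [nra | apply: Rlt_le; apply: Rinv_0_lt_compat; lra].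
have hss : 0 < e * e * (1 - gg) * (1 - gg).
  apply: Rmult_lt_0_compat => //; apply: Rmult_lt_0_compat => //; nra.
have q3 : 0 <= 8 * (e / ln 2 + 1) / (e * e * (1 - gg) * (1 - gg)).
  apply: Rmult_le_pos; [nra | apply: Rlt_le; apply: Rinv_0_lt_compat; lra].
rewrite /U0 in hU.
have hu1 : 1 <= u by lra.
have hq1 : 2 / (e * e) <= u by lra.
have hq2 : 4 * (e / ln 2 + 2) / e <= u by lra.
have hq3 : 8 * (e / ln 2 + 1) / (e * e * (1 - gg) * (1 - gg)) <= u by lra.
have hA1 := div_ge he0 (ltac:(nra) : 0 <= 4 * (e / ln 2 + 2)) hq2.
have hA2 := div_ge hss (ltac:(nra) : 0 <= 8 * (e / ln 2 + 1)) hq3.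
have hA3 := div_ge (ltac:(nra) : 0 < e * e) (ltac:(lra) : 0 <= 2) hq1.
have hexp := exp_ge_quad (ltac:(lra) : 0 <= u).
have hlin : e * u / ln 2 = e / ln 2 * u by rewrite /Rdiv; ring.
have hpow := pow_lower (ltac:(lra) : 0 < e < 1) (ltac:(lra) : 0 <= u) ht.
have hepos : 0 < exp (- gg * u) := exp_pos _.
have heu : exp (- gg * u) * exp u = exp ((1 - gg) * u) by rewrite -exp_plus; f_equal; ring.
have hq := exp_ge_quad (ltac:(nra) : 0 <= (1 - gg) * u).
have hEu : 0 < exp u := exp_pos u.
split; [|split].
- nra.
- have h1 : e * e * exp ((1 - gg) * u) / 2 <= 2 * e * e ^ t * exp u / 4.
    rewrite -heu.
    have := Rmult_le_compat_r (exp u) _ _ (Rlt_le _ _ hEu) hpow. nra.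
  apply: Rle_trans h1.
  have h2 : e * e * ((1 - gg) * u * ((1 - gg) * u) / 4) / 2 <= e * e * exp ((1 - gg) * u) / 2.
    have : 0 <= e * e by nra. nra.
  apply: Rle_trans h2.
  have : (e / ln 2 + 1) * u <= e * e * (1 - gg) * (1 - gg) / 8 * u * u by nra.
  nra.
- have h1 : 1 <= e * e / 2 * exp (- gg * u) * (exp u * exp u).
    have eq : exp (- gg * u) * (exp u * exp u) = exp ((2 - gg) * u).
      by rewrite -!exp_plus; f_equal; ring.
    have -> : e * e / 2 * exp (- gg * u) * (exp u * exp u) = e * e / 2 * exp ((2 - gg) * u).
      by rewrite -eq; ring.
    have := exp_ge_lin ((2 - gg) * u).
    have : 0 <= e * e by nra.
    nra.
  have hEE : 0 < exp u * exp u by nra.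
  apply: Rle_trans (_ : e * e / 2 * exp (- gg * u) <= _); last nra.
  apply: (Rmult_le_reg_r (exp u * exp u)) => //.
  rewrite Rinv_l; lra.
Qed.

Lemma up_nat (a : R) : 0 <= a -> a < INR (Z.to_nat (up a)) <= a + 1.
Proof.
move=> ha; have [h1 h2] := archimed a.
have hz : (0 <= up a)%Z by apply: le_IZR; lra.
rewrite INR_IZR_INZ Z2Nat.id //; lra.
Qed.

Lemma pow2_ge (n : nat) : INR n <= 2 ^ n.
Proof.
elim: n => [|n IH]; first by simpl; lra.
rewrite S_INR /=; have := pow_R1_Rle 2 n ltac:(lra); lra.
Qed.

Lemma pow2_sq (k : nat) : INR (k + 4)%coq_nat * INR (k + 4)%coq_nat <= 2 ^ (k + 4)%coq_nat.
Proof.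
elim: k => [|k IH]; first by simpl; lra.
have -> : (k.+1 + 4)%coq_nat = S (k + 4)%coq_nat by lia.
rewrite S_INR /=.
have : 4 <= INR (k + 4)%coq_nat by rewrite plus_INR; have := pos_INR k; simpl; lra.
nra.
Qed.

Lemma pow2_sq' (m : nat) : (4 <= m)%coq_nat -> INR m * INR m <= 2 ^ m.
Proof.
move=> h; have -> : m = (Nat.sub m 4 + 4)%coq_nat by lia. exact: pow2_sq.
Qed.

Lemma final_bound (c2 rho K : R) (n m t : nat) :
  0 < c2 -> 0 < rho -> / INR m <= c2 -> (4 <= m)%coq_nat -> (n <= m)%coq_nat ->
  (t <= n)%coq_nat -> (Nat.mul 4 (Nat.add t 1) <= n)%coq_nat ->
  / (INR n * INR n) <= rho / 4 -> c2 * 2 ^ (Nat.mul m m) <= K ->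
  INR t <= (rho / 4) ^ t * (rho / 2 * K).
Proof.
move=> hc2 hr hmc hm4 hnm htn h4 hrn hK.
have hmpos : 0 < INR m by apply: lt_0_INR; lia.
have hnpos : 0 < INR n by apply: lt_0_INR; lia.
set j := Nat.mul (Nat.mul 2 n) (Nat.add t 1).
have hj : (Nat.add j m <= Nat.mul m m)%coq_nat.
  rewrite /j.
  have a1 : (Nat.mul n (Nat.mul 4 (Nat.add t 1)) <= Nat.mul n n)%coq_nat by apply: Nat.mul_le_mono_l.
  have a2 : (Nat.mul n n <= Nat.mul m m)%coq_nat by apply: Nat.mul_le_mono.
  have a3 : (Nat.mul 4 m <= Nat.mul m m)%coq_nat by apply: Nat.mul_le_mono_r.
  nia.
have e1 : (rho / 4) ^ t * (rho / 2 * K) = 2 * ((rho / 4) ^ (Nat.add t 1) * K).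
  rewrite pow_add /=; field.
rewrite e1.
have hnn : / (INR n * INR n) >= (/ 2) ^ (Nat.mul 2 n).
  rewrite pow_inv; apply: Rle_ge; apply: Rinv_le_contravar; first nra.
  have -> : Nat.mul 2 n = Nat.add n n by lia. rewrite pow_add.
  have := pow2_ge n; have := pos_INR n; nra.
have hp1 : (/ 2) ^ j <= (rho / 4) ^ (Nat.add t 1).
  rewrite /j pow_mult; apply: pow_incr; split.
    apply: pow_le; lra.
  lra.
have hK0 : 0 < K by have := pow_lt 2 (Nat.mul m m) ltac:(lra); nra.
have hsplit : (2 ^ (Nat.mul m m) = 2 ^ (Nat.sub (Nat.mul m m) j) * 2 ^ j).
  rewrite -pow_add; f_equal; lia.
have hinv : (/ 2) ^ j * 2 ^ j = 1.
  rewrite -Rpow_mult_distr Rinv_l; [exact: pow1 | lra].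
have hm2 : 2 ^ m <= 2 ^ (Nat.sub (Nat.mul m m) j) by apply: Rle_pow; [lra | lia].
have hsq := pow2_sq' hm4.
have hcm : 1 <= c2 * INR m.
  have := Rmult_le_compat_r (INR m) _ _ (Rlt_le _ _ hmpos) hmc.
  rewrite Rinv_l; lra.
have htm : INR t <= INR m by apply: le_INR; lia.
have hpj : 0 < (/ 2) ^ j by apply: pow_lt; lra.
have step1 : c2 * 2 ^ m <= (/ 2) ^ j * K.
  have : (/ 2) ^ j * (c2 * 2 ^ (Nat.mul m m)) = c2 * 2 ^ (Nat.sub (Nat.mul m m) j).
    rewrite hsplit; transitivity (c2 * 2 ^ (Nat.sub (Nat.mul m m) j) * ((/ 2) ^ j * 2 ^ j)); [ring | rewrite hinv; ring].
  nra.
have step2 : INR t <= c2 * 2 ^ m.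
  have : INR m <= c2 * INR m * INR m by nra.
  nra.
have : (/ 2) ^ j * K <= (rho / 4) ^ (Nat.add t 1) * K by nra.
have := pos_INR t; lra.
Qed.

Theorem lemma4 (c1 c2 eta : R) :
  0 < c1 < 1 -> 0 < c2 < 1 -> 0 < eta <= 1 ->
  exists M : nat, forall m : nat, (M <= m)%N ->
  forall (TX TY TZ : finType) (X : {set TX}) (Y : {set TY}) (Z : {set TZ})
         (E : {set TX * TY * TZ}),
    partite3 X Y Z E ->
    INR #|X| = c1 * INR m ->
    INR #|Y| = c1 * INR m ->
    INR #|Z| >= c2 * 2 ^ (m * m)%N ->
    d3 X Y Z E >= eta ->
    exists (X' : {set TX}) (Y' : {set TY}) (Z' : {set TZ}),
      [/\ X' \subset X, Y' \subset Y, Z' \subset Z,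
          complete_sub X' Y' Z' E &
          [/\ #|X'| = #|Y'|, #|Y'| = #|Z'| &
               INR #|X'| >= eta / 4 * log2 (INR #|X|)]].
Proof.
move=> [hc1 hc1'] [hc2 hc2'] [he he'].
set e := eta / 4.
have he4 : 0 < e <= 1 / 4 by rewrite /e; lra.
set U := U0 e.
have hEU : 0 < exp U := exp_pos U.
set Mr := exp U / c1 + 4 + / c2.
have hic2 : 0 < / c2 by apply: Rinv_0_lt_compat.
have hUc : 0 < exp U / c1 by apply: Rdiv_lt_0_compat.
have hMr : 0 < Mr by rewrite /Mr; lra.
have [hM1 hM2] := up_nat (Rlt_le _ _ hMr).
exists (Z.to_nat (up Mr)) => m hm TX TY TZ X Y Z E hP hX hY hZ hd.
have hmM := INR_len hm.
have hmr : Mr < INR m by lra.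
have hm4 : (4 <= m)%coq_nat by apply: INR_le; rewrite /Mr in hmr; simpl; lra.
have hmc : / INR m <= c2.
  have hm0 : 0 < INR m by lra.
  have : / c2 <= INR m by rewrite /Mr in hmr; lra.
  move=> h; have := Rinv_le_contravar _ _ hic2 h; rewrite Rinv_inv; lra.
set n := #|X| in hX hd *.
have hXY : n = #|Y| by apply: INR_eq; rewrite hX hY.
have hnU : exp U <= INR n.
  rewrite hX; rewrite /Mr in hmr.
  have : exp U / c1 <= INR m by have := pos_INR m; lra.
  move=> h; have := Rmult_le_compat_l c1 _ _ (Rlt_le _ _ hc1) h.
  have -> : c1 * (exp U / c1) = exp U by field; lra. done.
have hn0 : 0 < INR n by lra.
have hnm : (n <= m)%coq_nat by apply: INR_le; rewrite hX; have := pos_INR m; nra.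
set u := ln (INR n).
have hun : exp u = INR n by rewrite /u exp_ln.
have hUu : U <= u.
  case: (Rle_lt_dec U u) => // h.
  have := exp_increasing _ _ h; lra.
have hU1 : 1 <= U.
  rewrite /U /U0.
  have [hg0 hg1] := gg_bounds.
  have hl2 := ln2_pos.
  have p1 : 0 <= e / ln 2 by apply: Rmult_le_pos; [lra | apply: Rlt_le; apply: Rinv_0_lt_compat; lra].
  have q1 : 0 <= 2 / (e * e) by apply: Rmult_le_pos; [lra | apply: Rlt_le; apply: Rinv_0_lt_compat; nra].
  have q2 : 0 <= 4 * (e / ln 2 + 2) / e.
    apply: Rmult_le_pos; [nra | apply: Rlt_le; apply: Rinv_0_lt_compat; lra].
  have hss : 0 < e * e * (1 - gg) * (1 - gg).
    apply: Rmult_lt_0_compat; [apply: Rmult_lt_0_compat; nra | lra].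
  have q3 : 0 <= 8 * (e / ln 2 + 1) / (e * e * (1 - gg) * (1 - gg)).
    apply: Rmult_le_pos; [nra | apply: Rlt_le; apply: Rinv_0_lt_compat; lra].
  lra.
set a := e * (u / ln 2).
have ha0 : 0 <= a by rewrite /a; have := ln2_pos; move=> hl; apply: Rmult_le_pos; [lra | apply: Rmult_le_pos; [lra | apply: Rlt_le; apply: Rinv_0_lt_compat; lra]].
have [ht1 ht2] := up_nat ha0.
set t := Z.to_nat (up a) in ht1 ht2.
have ht2' : INR t <= e * u / ln 2 + 1 by rewrite /a /Rdiv Rmult_assoc in ht2 *.
have [hA [hB hC]] := num_core he4 (Rle_trans _ _ _ (Rle_refl _) hUu) ht2'.
rewrite hun in hA hB hC.
have htn4 : (Nat.mul 4 (Nat.add t 1) <= n)%coq_nat.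
  apply: INR_le; rewrite mult_INR plus_INR; replace (INR 4) with 4 by (simpl; lra); replace (INR 1) with 1 by (simpl; lra).
  have : e * INR n <= INR n / 4 by nra. lra.
have htn : (t <= n)%coq_nat by lia.
have hK : c2 * 2 ^ (Nat.mul m m) <= INR #|Z| by apply: Rge_le; exact hZ.
have hKpos : 0 < INR #|Z| by have := pow_lt 2 (Nat.mul m m) ltac:(lra); nra.
have hE : eta * INR n * INR n * INR #|Z| <= INR #|E|.
  move: hd; rewrite /d3 -hXY => hd.
  have hden : 0 < INR n * INR n * INR #|Z| by apply: Rmult_lt_0_compat; nra.
  have := Rmult_le_compat_r _ _ _ (Rlt_le _ _ hden) (Rge_le _ _ hd).
  have -> : INR #|E| / (INR n * INR n * INR #|Z|) * (INR n * INR n * INR #|Z|) = INR #|E| by field; lra.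
  lra.
have hrho : eta / 2 * (eta / 4) ^ t = 2 * e * e ^ t by rewrite /e; field.
have hrpos : 0 < 2 * e * e ^ t by have := pow_lt e t ltac:(lra); nra.
have g1 : (0 < n)%N by apply/ltP; apply: INR_lt; change (INR 0) with 0; lra.
have g2 : 2 * INR t <= eta * INR n / 2 by rewrite /e in hA; lra.
have g3 : (t <= n)%N by apply/leP; exact htn.
have g4 : 2 * INR t <= eta / 2 * (eta / 4) ^ t * INR n / 2 by rewrite hrho; lra.
have g5 : INR t <= (eta / 2 * (eta / 4) ^ t / 4) ^ t * (eta / 2 * (eta / 4) ^ t / 2 * INR #|Z|).
  rewrite hrho; apply: (final_bound (c2 := c2) (m := m) (n := n)) => //; lia.
have [X' [Y' [Z' [sX sY sZ hc [cX cY cZ]]]]] :=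
  @comb _ _ _ X Y Z E eta t hP hXY g1 he hE g2 g3 g4 g5.
exists X', Y', Z'; split => //; split; [by rewrite cX cY | by rewrite cY cZ |].
rewrite cX -/n /log2 -/u; apply: Rle_ge; rewrite /a /e in ht1 *; lra.
Qed.
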